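(* Let $k \geq 2$ and $n \geq 1$ be integers, let $\Sigma_k = \{0,1,\ldots,k-1\}$, and let $\mathcal{D}$ be the set of primitive words in $\Sigma_k^n$. Consider the following procedure, which outputs symbols one at a time: (1) output $0^{n-1}$; (2) repeatedly, letting $x$ be the last $n-1$ symbols output so far, choose the largest $i \in \{0,\ldots,k-1\}$ such that $xi$ is primitive and $xi$ has not yet appeared as a factor of the word output so far, and output $i$; terminate when there is no such $i$. Then this procedure terminates and outputs a word of length $|\mathcal{D}| + n - 1$ that contains every primitive word in $\Sigma_k^n$ as a factor.
   Context: A word $w$ is primitive if there is no word $x$ and integer $p \geq 2$ with $w = x^p$. A factor (subword) of a word is a contiguous block of consecutive symbols. *)

(* Defs.v *)
From mathcomp Require Import all_boot.
Set Implicit Arguments. Unset Strict Implicit. Unset Printing Implicit Defensive.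

Definition word_over (k : nat) (w : seq nat) : Prop := all (fun a => a < k) w.

Definition primitive (w : seq nat) : Prop :=
  ~ (exists (x : seq nat) (p : nat), 2 <= p /\ w = flatten (nseq p x)).

Definition factor (u w : seq nat) : Prop := infix u w.

Definition lastsyms (n : nat) (s : seq nat) : seq nat := drop (size s - n.-1) s.

Definition valid (k n : nat) (s : seq nat) (i : nat) : Prop :=
  i < k /\ primitive (rcons (lastsyms n s) i) /\ ~ factor (rcons (lastsyms n s) i) s.

Definition greedy_step (k n : nat) (s s' : seq nat) : Prop :=
  exists i, valid k n s i /\ (forall j, valid k n s j -> j <= i) /\ s' = rcons s i.

Definition terminal (k n : nat) (s : seq nat) : Prop := forall i, ~ valid k n s i.

Inductive reachable (k n : nat) : seq nat -> Prop :=
| reach_start : reachable k n (nseq n.-1 0)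
| reach_step : forall s s', reachable k n s -> greedy_step k n s s' -> reachable k n s'.

(* Main.v *)
Require Import Defs.
From mathcomp Require Import all_boot zify.
From Stdlib Require Import Classical ClassicalEpsilon.
Set Implicit Arguments. Unset Strict Implicit. Unset Printing Implicit Defensive.


Lemma per_mod (f : nat -> nat) L p : 0 < p ->
  (forall i, i + p < L -> f i = f (i + p)) -> forall i, i < L -> f i = f (i %% p).
Proof.
move=> p0 hp; elim/ltn_ind => i IH iL.
case: (ltnP i p) => ip; first by rewrite modn_small.
have -> : i = (i - p) + p by rewrite subnK.
rewrite -hp; last by rewrite subnK.
rewrite IH; [by rewrite modnDr | lia | lia].
Qed.

Lemma FW (f : nat -> nat) : forall s p q L, p + q = s -> 0 < p -> 0 < q ->
  (forall i, i + p < L -> f i = f (i + p)) ->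
  (forall i, i + q < L -> f i = f (i + q)) ->
  p + q - gcdn p q <= L ->
  forall i, i < L -> f i = f (i %% gcdn p q).
Proof.
elim/ltn_ind => s IH p q L hs p0 q0 hp hq hL.
wlog pq : p q p0 q0 hp hq hL hs / p <= q.
  move=> W; case: (leqP p q) => [h|h]; first exact: W.
  rewrite gcdnC; apply: (W q p) => //; [by rewrite gcdnC addnC | lia | lia].
case: (ltnP p q) => pq'; last first.
  have -> : q = p by lia.
  by rewrite gcdnn; apply: per_mod.
have hg : gcdn p (q - p) = gcdn p q.
  by rewrite -gcdnDr subnK // ltnW.
have g0 : 0 < gcdn p q by rewrite gcdn_gt0 p0.
have gdq : gcdn p q <= q - p.
  by rewrite -hg; apply: dvdn_leq; [lia | exact: dvdn_gcdr].
have IH' : forall i, i < L - p -> f i = f (i %% gcdn p q).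
  rewrite -hg; apply: (IH q _ p (q - p)); [lia|lia|lia|lia| | |].
  - by move=> i hi; apply: hp; lia.
  - move=> i hi; rewrite (hq i); last by lia.
    rewrite (hp (i + (q - p))); last by lia.
    by congr f; lia.
  - by rewrite hg; lia.
move=> i iL; rewrite (per_mod p0 hp iL) IH'; last first.
  have := ltn_pmod i p0; lia.
by rewrite modn_dvdm // dvdn_gcdl.
Qed.


Lemma permul (X : nat -> nat) d : (forall i, X (i + d) = X i) ->
  forall j i, X (i + j * d) = X i.
Proof. move=> h; elim=> [|j IH] i; first by rewrite mul0n addn0.
by rewrite mulSn addnA IH h. Qed.

Lemma perdvd (X : nat -> nat) d l : (forall i, X (i + d) = X i) -> d %| l ->
  forall i, X (i + l) = X i.
Proof. by move=> h /dvdnP[j ->] i; apply: permul. Qed.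

Lemma arith1 a b : 2 <= a -> a < b -> 2*a + b <= a*b + 1.
Proof. move=> h1 h2. have : 1 <= (a - 1) * (b - 2) by rewrite muln_gt0; lia. nia. Qed.
Lemma bound_ar a b g t : 2 <= a -> 2 <= b -> a != b -> 0 < g -> t < a*g -> t < b*g ->
  a*g + b*g - g <= a*b*g - 1 - t.
Proof.
move=> a2 b2 ab g0 ta tb.
case: (ltngtP a b) ab => // hab _.
- have key2 : (2 * a + b) * g <= (a * b + 1) * g by rewrite leq_mul2r arith1 ?orbT.
  move: key2; rewrite !mulnDl mul1n -mulnA; lia.
- have key2 : (2 * b + a) * g <= (a * b + 1) * g.
    by rewrite leq_mul2r (mulnC a) arith1 ?orbT.
  move: key2; rewrite !mulnDl mul1n -mulnA; lia.
Qed.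

Lemma modn_subdvd g e x : g %| e -> e <= x -> (x - e) %% g = x %% g.
Proof. by move=> /dvdnP[y ->] hxy; rewrite -{2}(subnK hxy) addnC modnMDl. Qed.

Lemma L_core (n d e t m : nat) (X c : nat -> nat) :
 0 < d -> d < n -> d %| n -> 0 < e -> e < n -> e %| n ->
 (forall i, X (i + d) = X i) -> (forall i, c (i + e) = c i) ->
 1 <= t -> t <= n - 1 ->
 (forall i, t <= i -> i <= n - 2 -> c i = X i) ->
 c (n - 1) = m -> m <> 0 -> X (n - 1) = 0 ->
 (forall i, i < t -> c i = 0) -> False.
Proof.
move=> d0 dn ddn e0 en edn hX hc t1 tn hcX cm m0 Xm hz.
have Xn := perdvd hX ddn; have cn := perdvd hc edn.
have e2 : 2 * e <= n.
  move: edn => /dvdnP[q hq]; have : 1 < q by nia. nia.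
have d2 : 2 * d <= n.
  move: ddn => /dvdnP[q hq]; have : 1 < q by nia. nia.
have ce1 : c (e - 1) = m.
  by rewrite -cm -(cn (e-1)) -(hc (n-1)); congr c; lia.
have te : t < e.
  case: (ltnP t e) => // h; exfalso; apply: m0; rewrite -ce1 hz //; lia.
have Xe : X (e - 1) = m by rewrite -hcX //; lia.
have td : t < d.
  case: (ltnP t d) => // h; exfalso; apply: m0.
  have : c (d - 1 + e) = 0 by rewrite hc hz //; lia.
  rewrite hcX; [|lia|lia] => h0.
  by rewrite -Xe -(hX (e-1)) -h0; congr X; lia.
set l := lcmn d e; set g := gcdn d e.
have ldn : l %| n by rewrite dvdn_lcm ddn edn.
have l0 : 0 < l by rewrite lcmn_gt0 d0 e0.
have Xl : forall i, X (i + l) = X i := perdvd hX (dvdn_lcml d e).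
have cl : forall i, c (i + l) = c i := perdvd hc (dvdn_lcmr d e).
case: (ltnP l n) => ln.
  have l2 : 2 * l <= n.
    move: ldn => /dvdnP[q hq]; have : 1 < q by nia. nia.
  apply: m0.
  suff : c (n - 1) = X (n - 1) by rewrite cm Xm.
  have -> : n - 1 = (n - 1 - l) + l by lia.
  rewrite Xl cl hcX //; lia.
have ln' : l = n by apply/eqP; rewrite eqn_leq ln dvdn_leq //; lia.
have g0 : 0 < g by rewrite gcdn_gt0 d0.
have hge : l * g = d * e by rewrite muln_lcm_gcd.
move: (dvdn_gcdl d e) (dvdn_gcdr d e) => /dvdnP[a ha] /dvdnP[b hb].
rewrite -/g in ha hb.
have hn : n = a * b * g.
  apply/eqP; rewrite -(eqn_pmul2r g0); apply/eqP; rewrite -ln' hge ha hb; nia.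
have a2 : 2 <= a.
  case: a ha hn => [|[|a']] ha hn //; first by rewrite ha in d0.
  by move: en; rewrite hn hb mul1n ltnn.
have b2 : 2 <= b.
  case: b hb hn => [|[|b']] hb hn //; first by rewrite hb in e0.
  by move: dn; rewrite hn ha muln1 ltnn.
have ab : a != b.
  apply/negP => /eqP hab.
  have hde : d = e by rewrite ha hb hab.
  have gd : g = d by rewrite /g -hde gcdnn.
  have : 1 * g = a * g by rewrite mul1n -ha gd.
  by move/eqP; rewrite eqn_pmul2r // => /eqP h; rewrite -h in a2.
have bound : d + e - g <= n - 1 - t.
  rewrite hn ha hb; apply: bound_ar => //; rewrite -?ha -?hb //.
clear hge hn ha hb.
have mde : (n - 1 - t - e) %% g = (n - 1 - t) %% g.
  by apply: modn_subdvd; [exact: dvdn_gcdr | lia].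
have mdd : (n - 1 - t - d) %% g = (n - 1 - t) %% g.
  by apply: modn_subdvd; [exact: dvdn_gcdl | clear -td d2 t1; lia].
have FWr := @FW (fun i => X (t + i)) (d + e) d e (n - 1 - t) erefl d0 e0.
rewrite -/g in FWr.
clear Xl cl Xn cn ldn l0 ln ln' a2 b2 ab; clearbody g l.
pose f i := X (t + i).
have H := FWr _ _ bound.
have H1 : forall i, i + d < n - 1 - t -> f i = f (i + d).
  by move=> i _; rewrite /f addnA hX.
have H2 : forall i, i + e < n - 1 - t -> f i = f (i + e).
  move=> i hi.
  have [s1 s2] : t <= t + i /\ t + i <= n - 2 by clear -hi; lia.
  have [s3 s4] : t <= t + i + e /\ t + i + e <= n - 2 by clear -hi; lia.
  by rewrite /f addnA -(hcX (t + i)) // -(hcX (t + i + e)) // hc.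
have Hf := H H1 H2.
have E1 : c (n - 1) = f (n - 1 - t - e).
  have [s1 s2] : t <= t + (n - 1 - t - e) /\ t + (n - 1 - t - e) <= n - 2.
    by clear -te e2 t1; lia.
  rewrite /f -hcX // -(hc (t + _)); congr c; clear -te e2 t1; lia.
have E2 : X (n - 1) = f (n - 1 - t - d).
  rewrite /f -(hX (t + _)); congr X; clear -td d2 t1; lia.
have : c (n - 1) = X (n - 1).
  rewrite E1 E2 /f (Hf (n - 1 - t - e)); last by clear -te e2 t1; lia.
  by rewrite (Hf (n - 1 - t - d)) ?mde ?mdd //; clear -td d2 t1; lia.
by rewrite cm Xm.
Qed.


Lemma size_flat p (z : seq nat) : size (flatten (nseq p z)) = p * size z.
Proof. elim: p => //= p IH; by rewrite size_cat IH mulSn. Qed.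

Lemma nth_flat p (z : seq nat) j : j < p * size z ->
  nth 0 (flatten (nseq p z)) j = nth 0 z (j %% size z).
Proof.
elim: p j => [|p IH] j; first by rewrite mul0n.
rewrite mulSn /= nth_cat => hj.
case: ltnP => h; first by rewrite modn_small.
rewrite IH; last by lia.
by rewrite -{2}(subnK h) modnDr.
Qed.

Lemma nonprim_ex w : ~ primitive w -> exists z p, 2 <= p /\ w = flatten (nseq p z).
Proof. by move=> h; apply: NNPP. Qed.

Lemma nonprim_per n w : size w = n -> 0 < n -> ~ primitive w ->
  exists e, [/\ 0 < e, e < n, e %| n &
    forall i, nth 0 w ((i + e) %% n) = nth 0 w (i %% n)].
Proof.
move=> hs n0 /nonprim_ex [z [p [p2 hw]]].
have hn : n = p * size z by rewrite -hs hw size_flat.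
have e0 : 0 < size z by case: (size z) hn => //; lia.
exists (size z); split => //; first by nia.
  by rewrite hn dvdn_mull.
have key : forall i, nth 0 w (i %% n) = nth 0 z (i %% size z).
  move=> i; rewrite hw nth_flat; last by rewrite -hn ltn_mod.
  by rewrite modn_dvdm // hn dvdn_mull.
by move=> i; rewrite !key modnDr.
Qed.

Lemma Lseq n m t (x : seq nat) : size x = n.-1 -> ~ primitive (rcons x 0) ->
  m <> 0 -> 1 <= t -> t <= n - 1 -> primitive (drop t (rcons x m) ++ nseq t 0).
Proof.
move=> sx np m0 t1 tn hw.
have n2 : 2 <= n by lia.
have sx0 : size (rcons x 0) = n by rewrite size_rcons sx; lia.
have [d [d0 dn ddn hd]] := nonprim_per sx0 ltac:(lia) np.
set w := drop t (rcons x m) ++ nseq t 0.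
have sw : size w = n by rewrite size_cat size_drop size_nseq size_rcons sx; lia.
have [e [e0 en edn he]] := nonprim_per sw ltac:(lia) (fun h : primitive w => h hw).
pose X i := nth 0 (rcons x 0) (i %% n).
pose c i := nth 0 w ((i + n - t) %% n).
have sd : size (drop t (rcons x m)) = n - t by rewrite size_drop size_rcons sx; lia.
apply: (@L_core n d e t m X c) => //.
- move=> i; rewrite /c -[RHS]he; congr (nth 0 w (_ %% n)); lia.
- move=> i ti ni; rewrite /c.
  have -> : (i + n - t) %% n = i - t.
    have -> : i + n - t = (i - t) + n by lia.
    by rewrite modnDr modn_small //; lia.
  rewrite /X modn_small; last by lia.
  rewrite /w nth_cat sd ifT; last by lia.
  rewrite nth_drop subnKC // !nth_rcons sx !ifT //; lia.
- rewrite /c.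
  have -> : (n - 1 + n - t) %% n = n - 1 - t.
    have -> : n - 1 + n - t = (n - 1 - t) + n by lia.
    by rewrite modnDr modn_small //; lia.
  rewrite /w nth_cat sd ifT; last by lia.
  rewrite nth_drop nth_rcons sx ifF; last by lia.
  by rewrite ifT //; lia.
- rewrite /X modn_small; last by lia.
  by rewrite nth_rcons sx ifF; [rewrite ifT //|]; lia.
- move=> i it; rewrite /c modn_small; last by lia.
  rewrite /w nth_cat sd ifF; last by lia.
  by rewrite nth_nseq; case: ifP.
Qed.


Lemma Lrot p (u v : seq nat) :
  flatten (nseq p (u ++ v)) ++ u = u ++ flatten (nseq p (v ++ u)).
Proof.
elim: p => //= [|p IH]; first by rewrite cats0.
by rewrite -catA IH !catA.
Qed.

Lemma flat_nil p : flatten (nseq p ([::] : seq nat)) = [::].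
Proof. by elim: p. Qed.

Lemma prim_rot c (y : seq nat) : primitive (c :: y) <-> primitive (rcons y c).
Proof.
split => hp [z [p [p2 hz]]]; apply: hp.
- case/lastP: z hz => [|z' b] hz; first by move: hz; rewrite flat_nil; case: y.
  have := Lrot p [:: b] z'; rewrite /= [z' ++ _]cats1 -hz -rcons_cons cats1.
  move/rcons_inj => [h1 h2]; exists (b :: z'), p; split => //.
  by rewrite -h2 h1.
- case: z hz => [|b z'] hz; first by move: hz; rewrite flat_nil.
  have := Lrot p [:: b] z'; rewrite /= -hz [z' ++ _]cats1 /=; case=> e1 e2.
  by exists (rcons z' b), p; split => //; rewrite e1 -cats1 e2.
Qed.


Definition primb (w : seq nat) : bool :=
  if excluded_middle_informative (primitive w) then true else false.

Lemma primbP w : primb w <-> primitive w.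
Proof. by rewrite /primb; case: excluded_middle_informative. Qed.

Fixpoint allw (k n : nat) : seq (seq nat) :=
  if n is n'.+1 then [seq a :: w | a <- iota 0 k, w <- allw k n'] else [:: [::]].

Lemma mem_allw k n w : (w \in allw k n) = (size w == n) && all (fun a => a < k) w.
Proof.
elim: n w => [|n IH] [|a w] //=.
- by apply/negbTE/allpairsP => -[[b v] [_ _ h]].
- apply/allpairsP/idP => [[[b v] /= [hb hv [-> ->]]]|/andP[/eqP[hs] /andP[ha hw]]].
    by rewrite mem_iota in hb; move: hv; rewrite IH => /andP[/eqP -> ->]; rewrite eqxx andbT; lia.
  by exists (a, w); split => //=; [rewrite mem_iota add0n ha | rewrite IH hw hs eqxx].
Qed.

Lemma uniq_allw k n : uniq (allw k n).
Proof.
elim: n => //= n IH; apply: allpairs_uniq => //; first exact: iota_uniq.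
by move=> [a1 w1] [a2 w2] _ _ /= [-> ->].
Qed.

Lemma count_or (T : Type) (P Q : pred T) l : (forall j, Q j -> ~~ P j) ->
  count (fun j => P j || Q j) l = count P l + count Q l.
Proof.
move=> h; elim: l => //= a l ->.
case: (boolP (Q a)) => hq; first by rewrite (negbTE (h _ hq)) /=; lia.
by rewrite orbF /=; lia.
Qed.

Lemma count1_iota a k : a < k -> count (fun j => j == a) (iota 0 k) = 1.
Proof.
move=> ha; have := count_uniq_mem a (iota_uniq 0 k).
by rewrite mem_iota add0n ha /=; move=> <-; apply: eq_count => j.
Qed.

Lemma count_imp_eq (T : eqType) (P Q : pred T) l : (forall a, P a -> Q a) ->
  count P l = count Q l -> forall a, a \in l -> Q a -> P a.
Proof.
move=> h; elim: l => //= b l IH e a; rewrite in_cons => /orP[/eqP ->|al] qa.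
  apply/negPn/negP => pb; move: e; rewrite (negbTE pb) qa /=.
  have := sub_count (a1 := P) (a2 := Q) h l; lia.
apply: IH => //; move: e; case: (boolP (P b)) => pb.
  by rewrite (h _ pb) /=; lia.
case: (Q b) => /=; last lia.
have := sub_count (a1 := P) (a2 := Q) h l; lia.
Qed.

Lemma count_lt (T : eqType) (P Q : pred T) l a : (forall a, P a -> Q a) ->
  a \in l -> Q a -> ~~ P a -> count P l < count Q l.
Proof.
move=> h; elim: l => //= b l IH; rewrite in_cons => /orP[/eqP ->|al] qa pa.
  rewrite (negbTE pa) qa /=; have := sub_count (a1 := P) (a2 := Q) h l; lia.
have := IH al qa pa; case: (boolP (P b)) => pb; first by rewrite (h _ pb) /=; lia.
by case: (Q b) => /=; lia.
Qed.

Section Main.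
Variables k n : nat.
Hypothesis hk : 2 <= k.
Hypothesis hn : 1 <= n.

Definition v0 := nseq n.-1 0.
Definition D := filter primb (allw k n).
Definition inc s x := count (fun j => infix (j :: x) s) (iota 0 k).
Definition outc s x := count (fun j => infix (rcons x j) s) (iota 0 k).
Definition degx x := count (fun j => primb (rcons x j)) (iota 0 k).

Definition Inv s := word_over k s /\ n.-1 <= size s /\
   (forall w, size w = n -> infix w s -> primitive w) /\
   (forall x, size x = n.-1 -> forall j j', infix (rcons x j) s -> j < j' -> j' < k ->
       primitive (rcons x j') -> infix (rcons x j') s) /\
   (forall x, size x = n.-1 -> inc s x + (x == v0) = outc s x + (x == lastsyms n s)) /\
   size s = n.-1 + count (fun w => infix w s) D.

Lemma mem_D w : w \in D <-> (size w = n /\ word_over k w /\ primitive w).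
Proof.
rewrite mem_filter mem_allw; split.
  by move=> /andP[/primbP hp /andP[/eqP hs hw]].
by move=> [hs [hw hp]]; apply/andP; split; [apply/primbP | rewrite hs eqxx].
Qed.

Lemma uniq_D : uniq D.
Proof. exact/filter_uniq/uniq_allw. Qed.

Lemma size_last s : n.-1 <= size s -> size (lastsyms n s) = n.-1.
Proof. by move=> h; rewrite /lastsyms size_drop; lia. Qed.

Lemma infix_step s i w : size w = n -> n.-1 <= size s ->
  infix w (rcons s i) = infix w s || (w == rcons (lastsyms n s) i).
Proof.
move=> hw hs; rewrite infix_rconsl orbC suffixE size_rcons hw.
have -> : (size s).+1 - n = size s - n.-1 by lia.
by rewrite drop_rcons ?leq_subr // eq_sym.
Qed.

Lemma last_step s i : n.-1 <= size s ->
  lastsyms n (rcons s i) = behead (rcons (lastsyms n s) i).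
Proof.
move=> hs; rewrite /lastsyms size_rcons.
have -> : (size s).+1 - n.-1 = 1 + (size s - n.-1) by lia.
by rewrite -drop_drop drop1 drop_rcons ?leq_subr.
Qed.

Lemma noinf (s w : seq nat) : size s < size w -> infix w s = false.
Proof. by move=> h; apply: negbTE; apply/negP => /size_infix h2; move: (leq_ltn_trans h2 h); rewrite ltnn. Qed.

Lemma inv_start : Inv v0.
Proof.
have sv : size v0 = n.-1 by rewrite size_nseq.
split; first by rewrite /word_over all_nseq; apply/orP; right => /=; lia.
split; first by rewrite sv.
split; first by move=> w hw; rewrite noinf // sv hw; lia.
split; first by move=> x hx j j'; rewrite noinf // sv size_rcons hx; lia.
split.
  move=> x hx; rewrite /inc /outc /lastsyms sv subnn drop0.
  rewrite (eq_count (a2 := pred0)); last by move=> j; rewrite noinf // sv /= hx; lia.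
  rewrite (eq_count (a1 := fun j => infix (rcons x j) v0) (a2 := pred0)); last first.
    by move=> j; rewrite noinf // sv size_rcons hx; lia.
  by rewrite count_pred0.
rewrite sv (eq_in_count (a2 := pred0)) ?count_pred0 ?addn0 //.
by move=> w /mem_D [hw _]; rewrite noinf // sv hw; lia.
Qed.

Lemma sr (x : seq nat) j : size x = n.-1 -> size (rcons x j) = n.
Proof. by move=> h; rewrite size_rcons h; lia. Qed.

Lemma rcons_head (u : seq nat) i : rcons u i = head i u :: behead (rcons u i).
Proof. by case: u. Qed.

Lemma count_cons_eq (x y : seq nat) a : a < k ->
  count (fun j => (j :: x) == (a :: y)) (iota 0 k) = (x == y).
Proof.
move=> ha; case: (x =P y) => [->|ne].
  by rewrite [RHS]/= -(count1_iota ha); apply: eq_count => j; rewrite eqseq_cons eqxx andbT.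
rewrite (eq_count (a2 := pred0)) ?count_pred0 // => j.
by rewrite eqseq_cons; apply/negbTE; apply/nandP; right; apply/eqP.
Qed.

Lemma count_rcons_eq (x y : seq nat) a : a < k ->
  count (fun j => (rcons x j) == (rcons y a)) (iota 0 k) = (x == y).
Proof.
move=> ha; case: (x =P y) => [->|ne].
  by rewrite [RHS]/= -(count1_iota ha); apply: eq_count => j; rewrite eqseq_rcons eqxx.
rewrite (eq_count (a2 := pred0)) ?count_pred0 // => j.
by rewrite eqseq_rcons; apply/negbTE; apply/nandP; left; apply/eqP.
Qed.

Lemma wo_last s : word_over k s -> word_over k (lastsyms n s).
Proof.
move=> /allP h; apply/allP => a ha; apply: h; exact: (mem_drop ha).
Qed.

Lemma inv_step s s' : Inv s -> greedy_step k n s s' -> Inv s'.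
Proof.
move=> [hw [hs [hp [hg [hb hsz]]]]] [i [[ik [ipr inf]] [hmax ->]]].
set u := lastsyms n s in ipr inf hmax hb *.
have su : size u = n.-1 by apply: size_last.
have wu : word_over k u by apply: wo_last.
have ninf : infix (rcons u i) s = false by apply: negbTE; apply/negP.
split; first by rewrite /word_over all_rcons ik.
split; first by rewrite size_rcons; lia.
split.
  move=> w sw; rewrite infix_step // => /orP[/(hp _ sw) //|/eqP ->] //.
split.
  move=> x sx j j'; rewrite !infix_step ?sr //.
  case/orP => [h|/eqP h] jj' j'k pj'; apply/orP; left; first exact: (hg x sx j j').
  move/rcons_inj: h => [ex ej]; rewrite ex in pj' *; rewrite ej in jj'.
  apply/negPn/negP => nj.
  have : j' <= i by apply: hmax; split => //; split => //; apply/negP.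
  lia.
split.
  move=> x sx; rewrite last_step //.
  have hi : inc (rcons s i) x = inc s x + (x == behead (rcons u i)).
    rewrite /inc (eq_count (a2 := fun j => infix (j :: x) s || ((j :: x) == rcons u i))).
      rewrite count_or.
        rewrite {1}(rcons_head u i) count_cons_eq //.
        case: u su wu {ipr inf hmax hb ninf} => //= a u' _ /andP[] //.
      by move=> j /eqP ->; rewrite ninf.
    by move=> j; rewrite infix_step //= sx; lia.
  have ho : outc (rcons s i) x = outc s x + (x == u).
    rewrite /outc (eq_count (a2 := fun j => infix (rcons x j) s || ((rcons x j) == rcons u i))).
      rewrite count_or; first by rewrite count_rcons_eq.
      by move=> j /eqP ->; rewrite ninf.
    by move=> j; rewrite infix_step ?sr.
  rewrite hi ho -/u; have := hb x sx; lia.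
rewrite size_rcons hsz.
rewrite (eq_in_count (a1 := fun w => infix w (rcons s i)) (a2 := fun w => infix w s || (w == rcons u i))); last first.
  by move=> w /mem_D [sw _] /=; rewrite infix_step.
rewrite count_or; last by move=> w /eqP ->; rewrite ninf.
have -> : count (fun w => w == rcons u i) D = 1.
  have := count_uniq_mem (rcons u i) uniq_D.
  have -> : rcons u i \in D by apply/mem_D; split; [exact: sr | split; [rewrite /word_over all_rcons ik| ]].
  by move=> h; rewrite (eq_count (a2 := pred1 (rcons u i))) // h.
by rewrite addn1 addnS.
Qed.

Lemma reach_inv s : reachable k n s -> Inv s.
Proof. elim=> [|s0 s1 _ IH hst]; [exact: inv_start | exact: inv_step IH hst]. Qed.

Definition validb s i := (i < k) && primb (rcons (lastsyms n s) i)
  && ~~ infix (rcons (lastsyms n s) i) s.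

Lemma validbP s i : validb s i <-> valid k n s i.
Proof.
rewrite /validb /valid; split.
  by move=> /andP[/andP[h1 /primbP h2] /negP h3].
by move=> [h1 [/primbP h2 /negP h3]]; rewrite h1 h2.
Qed.

Definition cnt s := count (fun w => infix w s) D.

Lemma step_or_term s : reachable k n s -> terminal k n s \/
  exists s', reachable k n s' /\ cnt s' = (cnt s).+1.
Proof.
move=> hr; case: (classic (terminal k n s)) => ht; first by left.
right; have [i vi] : exists i, valid k n s i.
  by apply: NNPP => h; apply: ht => i vi; apply: h; exists i.
have exP : exists i, validb s i by exists i; apply/validbP.
have ubP : forall i, validb s i -> i <= k by move=> j /andP[/andP[h _] _]; lia.
case: (ex_maxnP exP ubP) => im /validbP vim hmax.
have hst : greedy_step k n s (rcons s im).
  by exists im; split => //; split => // j /validbP; apply: hmax.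
have hr' : reachable k n (rcons s im) by apply: reach_step hr hst.
exists (rcons s im); split => //.
have [_ [_ [_ [_ [_ h1]]]]] := reach_inv hr.
have [_ [_ [_ [_ [_ h2]]]]] := reach_inv hr'.
move: h2; rewrite size_rcons h1 /cnt; lia.
Qed.

Lemma exists_term : exists s, reachable k n s /\ terminal k n s.
Proof.
suff : forall N s, reachable k n s -> size D - cnt s <= N ->
    exists s', reachable k n s' /\ terminal k n s'.
  by move=> /(_ (size D) (nseq n.-1 0) (reach_start k n)); apply; lia.
elim=> [|N IH] s hr hN; case: (step_or_term hr) => [ht|[s' [hr' hc]]];
  try by exists s.
- have : cnt s' <= size D := count_size _ _. move: hc hN; rewrite /cnt; lia.
- apply: (IH s' hr'); lia.
Qed.

Definition full s x := forall j, j < k -> primitive (rcons x j) -> infix (rcons x j) s.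

Lemma outc_le s x : Inv s -> size x = n.-1 -> outc s x <= degx x.
Proof.
move=> [_ [_ [hp _]]] sx; apply: sub_count => j /= h.
by apply/primbP; apply: hp h; apply: sr.
Qed.

Lemma inc_le s x : Inv s -> size x = n.-1 -> inc s x <= degx x.
Proof.
move=> [_ [_ [hp _]]] sx; apply: sub_count => j /= h.
by apply/primbP/prim_rot; apply: hp h => /=; rewrite sx; lia.
Qed.

Lemma full_eq s x : Inv s -> size x = n.-1 -> full s x -> outc s x = degx x.
Proof.
move=> [_ [_ [hp _]]] sx hf; apply: eq_in_count => j; rewrite mem_iota add0n => /= jk.
apply/idP/idP => [h|/primbP h]; last exact: hf.
by apply/primbP; apply: hp h; apply: sr.
Qed.

Lemma notfull_lt s x : Inv s -> size x = n.-1 -> ~ full s x -> outc s x < degx x.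
Proof.
move=> hI sx nf.
have [j [jk [pj nj]]] : exists j, j < k /\ primitive (rcons x j) /\ ~ infix (rcons x j) s.
  apply: NNPP => h; apply: nf => j jk pj; apply: NNPP => nj; apply: h; exists j; auto.
have [_ [_ [hp _]]] := hI.
apply: (@count_lt _ _ _ _ j) => //.
- by move=> c /= h; apply/primbP; apply: hp h; apply: sr.
- by rewrite mem_iota add0n.
- by apply/primbP.
- by apply/negP.
Qed.

Lemma term_full s : terminal k n s -> full s (lastsyms n s).
Proof.
move=> ht j jk pj; apply: NNPP => nj; apply: (ht j); split => //.
Qed.

Lemma end_v0 s : Inv s -> terminal k n s -> lastsyms n s = v0.
Proof.
move=> hI ht; have [_ [hs [_ [_ [hb _]]]]] := hI.
have su := size_last hs.
case: (lastsyms n s =P v0) => // ne; exfalso.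
have := hb _ su; rewrite eqxx (introF eqP ne).
have := full_eq hI su (term_full ht); have := inc_le hI su; lia.
Qed.

Lemma sv0 : size v0 = n.-1. Proof. by rewrite size_nseq. Qed.

Lemma inc_v0 s : Inv s -> terminal k n s -> inc s v0 = degx v0.
Proof.
move=> hI ht; have [_ [hs [_ [_ [hb _]]]]] := hI.
have := hb _ sv0; rewrite (end_v0 hI ht) eqxx.
have hf := term_full ht; rewrite (end_v0 hI ht) in hf.
have := full_eq hI sv0 hf; lia.
Qed.

Lemma next s x j : Inv s -> terminal k n s -> size x = n.-1 -> word_over k x ->
  j < k -> primitive (rcons x j) -> ~ infix (rcons x j) s ->
  ~ full s (behead (rcons x j)).
Proof.
move=> hI ht sx wx jk pj nj hf.
set y := behead (rcons x j) in hf.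
set a := head j x.
have ha : rcons x j = a :: y by apply: rcons_head.
have sy : size y = n.-1 by rewrite /y size_behead size_rcons sx.
have ak : a < k by move: wx; rewrite /a; case: (x) => [_|b x' /andP[]] //=.
have lt : inc s y < degx y.
  apply: (@count_lt _ _ _ _ a).
  - have [_ [_ [hp _]]] := hI.
    by move=> c /= h; apply/primbP/prim_rot; apply: hp h => /=; rewrite sy; lia.
  - by rewrite mem_iota add0n.
  - by apply/primbP/prim_rot; rewrite -ha.
  - by rewrite -ha; apply/negP.
case: (y =P v0) => [ey|ne].
  by move: lt; rewrite ey (inc_v0 hI ht) ltnn.
have [_ [hs [_ [_ [hb _]]]]] := hI.
have := hb _ sy; rewrite (end_v0 hI ht) (introF eqP ne).
have := full_eq hI sy hf; lia.
Qed.

Lemma zero_unused s x : Inv s -> size x = n.-1 -> ~ full s x ->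
  primitive (rcons x 0) -> ~ infix (rcons x 0) s.
Proof.
move=> hI sx nf p0 i0.
have [j [jk [pj nj]]] : exists j, j < k /\ primitive (rcons x j) /\ ~ infix (rcons x j) s.
  apply: NNPP => h; apply: nf => j jk pj; apply: NNPP => nj; apply: h; exists j; auto.
have [_ [_ [_ [hg _]]]] := hI.
case: j jk pj nj => [|j] jk pj nj; first exact: nj.
by apply: nj; apply: (hg x sx 0 j.+1).
Qed.

Lemma all_drop (P : pred nat) t l : all P l -> all P (drop t l).
Proof. by move=> /allP h; apply/allP => a /mem_drop /h. Qed.

Lemma rcons_nseq0 t : rcons (nseq t 0) 0 = nseq t.+1 0.
Proof. by elim: t => //= t ->. Qed.

Lemma all_full s : Inv s -> terminal k n s ->
  forall x, size x = n.-1 -> word_over k x -> full s x.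
Proof.
move=> hI ht.
have fv0 : full s v0 by have := term_full ht; rewrite (end_v0 hI ht).
suff H : forall h x, size x = n.-1 -> word_over k x -> drop h x = nseq (n.-1 - h) 0 -> full s x.
  move=> x sx wx; apply: (H n.-1) => //; by rewrite drop_oversize ?sx ?subnn.
elim=> [|h IH] x sx wx.
  by rewrite drop0 subn0 => ->.
move=> dx.
case: (leqP n.-1 h) => hh.
  apply: IH => //; rewrite drop_oversize ?sx //.
  by have -> : n.-1 - h = 0 by lia.
apply: NNPP => nf.
case: (classic (primitive (rcons x 0))) => p0.
  have ni := zero_unused hI sx nf p0.
  apply: (next hI ht sx wx _ p0 ni); first lia.
  apply: IH.
  - by rewrite size_behead size_rcons sx.
  - by move: wx; rewrite /word_over -drop1 => hw; apply: all_drop; rewrite all_rcons hw andbT /=; lia.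
  - rewrite -drop1 drop_drop addn1 drop_rcons ?sx // dx.
    have -> : n.-1 - h = (n.-1 - h.+1).+1 by lia.
    by rewrite rcons_nseq0.
have [j [jk [pj nj]]] : exists j, j < k /\ primitive (rcons x j) /\ ~ infix (rcons x j) s.
  apply: NNPP => h0; apply: nf => j jk pj; apply: NNPP => nj; apply: h0; exists j; auto.
have j0 : j <> 0 by move=> e; rewrite e in pj.
pose z t := drop t (rcons x j) ++ nseq t.-1 0.
have sz : forall t, 1 <= t -> t <= n -> size (z t) = n.-1.
  by move=> t t1 tn; rewrite /z size_cat size_drop size_rcons sx size_nseq; lia.
have wz : forall t, word_over k (z t).
  move=> t; rewrite /z /word_over all_cat all_nseq; apply/andP; split.
    by apply: all_drop; rewrite all_rcons jk.
  by apply/orP; right => /=; lia.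
have chain : forall t, 1 <= t -> t <= n -> ~ full s (z t).
  elim=> [//|t IHt] _ tn.
  case: t IHt tn => [|t] IHt tn.
    by rewrite /z /= cats0 drop1; apply: next.
  have nft := IHt erefl ltac:(lia).
  have hz : rcons (z t.+1) 0 = drop t.+1 (rcons x j) ++ nseq t.+1 0.
    by rewrite /z rcons_cat rcons_nseq0.
  have pz : primitive (rcons (z t.+1) 0).
    by rewrite hz; apply: (@Lseq n j t.+1 x) => //; lia.
  have := next hI ht (sz t.+1 erefl ltac:(lia)) (wz t.+1) (ltac:(lia) : 0 < k) pz
     (zero_unused hI (sz t.+1 erefl ltac:(lia)) nft pz).
  congr (~ full s _).
  have ne : 0 < size (drop t.+1 (rcons x j)) by rewrite size_drop size_rcons sx; lia.
  rewrite hz /z -drop1; case: (drop t.+1 (rcons x j)) (drop_drop (rcons x j) 1 t.+1) ne => //= b l.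
  by rewrite !drop0 add1n => ->.
have := chain n hn (leqnn n); rewrite /z drop_oversize ?size_rcons ?sx; last lia.
by move=> hc; apply: hc; exact: fv0.
Qed.

End Main.


Theorem proposition1 (k n : nat) (hk : 2 <= k) (hn : 1 <= n) :
  exists (out : seq nat) (D : seq (seq nat)),
    (* D enumerates (without repetition) the primitive words of Sigma_k^n *)
    uniq D /\
    (forall w, w \in D <-> (size w = n /\ word_over k w /\ primitive w)) /\
    (* the procedure terminates, with output [out] *)
    reachable k n out /\ terminal k n out /\
    size out = size D + n - 1 /\
    (forall w, size w = n -> word_over k w -> primitive w -> factor w out).
Proof.
have [s [hr ht]] := exists_term hk hn.
have hI := reach_inv hk hn hr.
have hall : forall w, size w = n -> word_over k w -> primitive w -> factor w s.
  move=> w sw ww pw; case/lastP: w sw ww pw => [|x j] sw ww pw; first by move: sw => /= ; lia.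
  move: ww; rewrite /word_over all_rcons => /andP[jk wx].
  have sx : size x = n.-1 by move: sw; rewrite size_rcons; lia.
  exact: (all_full hk hn hI ht sx wx jk pw).
exists s, (D k n); split; first exact: uniq_D.
split; first by move=> w; apply: mem_D.
split => //; split => //; split; last exact: hall.
have [_ [_ [_ [_ [_ hsz]]]]] := hI.
rewrite hsz (eq_in_count (a2 := predT)) ?count_predT; first by rewrite -subn1 addnC addnBA.
by move=> w /mem_D [sw [ww pw]]; apply: hall.
Qed.
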